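(* Assume the reduced model family $(V_k)_{k=1,\dots,K}$ is $\sigma$-admissible for some $\sigma>0$. Let $u^*(w)$ be the estimator obtained by surrogate model selection. Then $$E_{wc}:=\sup_{u\in\mathcal M}\|u-u^*(P_Wu)\|\le \delta_{\kappa\sigma},\qquad \kappa=R/r.$$ In particular, for the idealized selection in which $k^*(w)$ minimizes $\operatorname{dist}(u_k^*(w),\mathcal M)$ over $k$ (i.e. $\mathcal S=\operatorname{dist}$, $r=R=1$), one has $E_{wc}\le\delta_\sigma$.
   Context: Let $V$ be a real Hilbert space with norm $\|\cdot\|$. Let $Y\subset\mathbb R^d$ be compact and let $y\mapsto u(y)$ be a continuous map from $Y$ to $V$. Set $\mathcal M=\{u(y):y\in Y\}$, which is compact. Let $W\subset V$ be a linear subspace of finite dimension $m$, let $P_W$ be the orthogonal projection onto $W$, and let $W^\perp$ be its orthogonal complement. For $w\in W$ put $V_w=w+W^\perp$. For $\sigma\ge 0$ define - $\mathcal M_\sigma=\{v\in V:\operatorname{dist}(v,\mathcal M)\le\sigma\}$; - $\delta_\sigma=\sup\{\|u-v\|: u,v\in\mathcal M_\sigma,\ u-v\in W^\perp\}$. For a finite-dimensional subspace $E\subset V$ let $\mu(E,W)=\sup_{v\in E\setminus\{0\}}\|v\|/\|P_Wv\|$, with the conventions $\mu(\{0\},W)=1$ and $\mu(E,W)=+\infty$ if $E\cap W^\perp\ne\{0\}$. A reduced model family consists of: - sets $\mathcal M_1,\dots,\mathcal M_K$ with $\mathcal M=\bigcup_{k=1}^K\mathcal M_k$; - affine spaces $V_k=\bar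 u_k+\bar V_k$, where $\bar u_k\in V$ and $\bar V_k$ is a linear subspace of dimension $n_k\le m$; - numbers $\varepsilon_k\ge\sup_{u\in\mathcal M_k}\operatorname{dist}(u,V_k)$; - constants $\mu_k=\mu(\bar V_k,W)<\infty$. The family is $\sigma$-admissible if $\mu_k\varepsilon_k\le\sigma$ for all $k$. It is $(\varepsilon,\mu)$-admissible if $\varepsilon_k\le\varepsilon$ and $\mu_k\le\mu$ for all $k$. For $w\in W$ the PBDW estimators are $u_k^*(w)=\operatorname{argmin}\{\operatorname{dist}(v,V_k): v\in V_w\}$, $k=1,\dots,K$ (the minimizer is unique). A surrogate is a function $\mathcal S(\cdot,\mathcal M):V\to[0,\infty)$ with $r\operatorname{dist}(v,\mathcal M)\le\mathcal S(v,\mathcal M)\le R\operatorname{dist}(v,\mathcal M)$ for all $v\in V$, where $0<r\le R$ are constants; set $\kappa=R/r$. Surrogate model selection picks $k^*(w)$ as any minimizer of $k\mapsto\mathcal S(u_k^*(w),\mathcal M)$ over $\{1,\dots,K\}$ and sets $u^*(w)=u^*_{k^*(w)}(w)$. *)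

(* Defs.v *)
From HB Require Import structures.
From mathcomp Require Import all_boot all_order all_algebra.
From mathcomp Require Import all_classical all_reals all_analysis.
Set Implicit Arguments. Unset Strict Implicit. Unset Printing Implicit Defensive.
Import Order.TTheory GRing.Theory Num.Theory.
Import numFieldNormedType.Exports.
Local Open Scope classical_set_scope.
Local Open Scope ring_scope.

Section Defs.
Context {R : realType} {V : normedModType R}.

(* ip is a real inner product inducing the norm of V
   (with V complete, (V, ip) is a real Hilbert space). *)
Definition inner_product (ip : V -> V -> R) : Prop :=
  [/\ (forall x y, ip x y = ip y x),
      (forall (a : R) x y z, ip (a *: x + y) z = a * ip x z + ip y z) &
      (forall x, ip x x = `|x| ^+ 2)].

Definition lin_indep n (b : 'I_n -> V) : Prop :=
  forall c : 'I_n -> R, \sum_(i < n) c i *: b i = 0 -> forall i, c i = 0.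

Definition span n (b : 'I_n -> V) : set V :=
  [set v | exists c : 'I_n -> R, v = \sum_(i < n) c i *: b i].

Definition subspace_of_dim (E : set V) (n : nat) : Prop :=
  exists b : 'I_n -> V, lin_indep b /\ E = span b.

Definition orth_compl (ip : V -> V -> R) (W : set V) : set V :=
  [set v | forall w, W w -> ip v w = 0].

Definition orth_proj (ip : V -> V -> R) (W : set V) (P : V -> V) : Prop :=
  forall v, W (P v) /\ orth_compl ip W (v - P v).

(* dist(v, A) = inf_{a in A} ||v - a||  (= +oo if A is empty) *)
Definition dist_set (v : V) (A : set V) : \bar R :=
  ereal_inf [set (`|v - a|)%:E | a in A].

Definition affine (ubar : V) (Vbar : set V) : set V :=
  [set ubar + x | x in Vbar].

Definition fattening (M : set V) (s : R) : set V :=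
  [set v | (dist_set v M <= s%:E)%E].

Definition delta (ip : V -> V -> R) (W : set V) (M : set V) (s : R) : \bar R :=
  ereal_sup [set x | exists u v, [/\ fattening M s u, fattening M s v,
                      orth_compl ip W (u - v) & x = (`|u - v|)%:E]].

Definition mu_ratio (P : V -> V) (v : V) : \bar R :=
  if P v == 0 then +oo%E else (`|v| / `|P v|)%:E.

(* mu(E, W) with P = P_W; mu({0}, W) = 1, and mu(E,W) = +oo if E meets W^perp
   nontrivially (through mu_ratio) *)
Definition mu (P : V -> V) (E : set V) : \bar R :=
  if `[< E `<=` [set 0] >] then 1%E else ereal_sup (mu_ratio P @` (E `\ 0)).

End Defs.

(* Main.v *)
Require Import Defs.
From HB Require Import structures.
From mathcomp Require Import all_boot all_order all_algebra.
From mathcomp Require Import all_classical all_reals all_analysis.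
From mathcomp Require Import ring lra zify.
Import Order.TTheory GRing.Theory Num.Theory.
Import numFieldNormedType.Exports.
Local Open Scope classical_set_scope.
Local Open Scope ring_scope.
Set Implicit Arguments. Unset Strict Implicit.

Lemma ipC (R : realType) (V : normedModType R) (ip : V -> V -> R) :
  inner_product ip -> forall x y, ip x y = ip y x.
Proof. by case. Qed.

Lemma ip0l (R : realType) (V : normedModType R) (ip : V -> V -> R) :
  inner_product ip -> forall z, ip 0 z = 0.
Proof.
case=> _ H _ z; have := H 1 0 0 z; rewrite scaler0 addr0 mul1r => e.
lra.
Qed.

Section IP.
Context (R : realType) (V : normedModType R) (ip : V -> V -> R) (Hip : inner_product ip).

Lemma ipDl x y z : ip (x + y) z = ip x z + ip y z.
Proof. by case: Hip => _ H _; rewrite -[x]scale1r H mul1r scale1r. Qed.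
Lemma ipZl a x z : ip (a *: x) z = a * ip x z.
Proof. by case: Hip => _ H _; rewrite -[a *: x]addr0 H (ip0l Hip) addr0. Qed.
Lemma ipNl x z : ip (- x) z = - ip x z.
Proof. by rewrite -scaleN1r ipZl mulN1r. Qed.
Lemma ipBl x y z : ip (x - y) z = ip x z - ip y z.
Proof. by rewrite ipDl ipNl. Qed.
Lemma ipDr x y z : ip z (x + y) = ip z x + ip z y.
Proof. by rewrite !(ipC Hip z) ipDl. Qed.
Lemma ipZr a x z : ip z (a *: x) = a * ip z x.
Proof. by rewrite !(ipC Hip z) ipZl. Qed.
Lemma ipBr x y z : ip z (x - y) = ip z x - ip z y.
Proof. by rewrite !(ipC Hip z) ipBl. Qed.
Lemma ip0r z : ip z 0 = 0.
Proof. by rewrite ipC // ip0l. Qed.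
Lemma ipxx x : ip x x = `|x| ^+ 2.
Proof. by case: Hip. Qed.
Lemma normD2 x y : `|x + y| ^+ 2 = `|x| ^+ 2 + 2 * ip x y + `|y| ^+ 2.
Proof. rewrite -!ipxx ipDl !ipDr (ipC Hip y x); ring. Qed.
Lemma normB2 x y : `|x - y| ^+ 2 = `|x| ^+ 2 - 2 * ip x y + `|y| ^+ 2.
Proof. rewrite normD2 normrN -scaleN1r ipZr; ring. Qed.
Lemma ip_le x y : ip x y <= `|x| * `|y|.
Proof.
have h1 := normD2 x y; have h2 : `|x + y| <= `|x| + `|y| by apply: ler_normD.
have h3 : 0 <= `|x + y| by []. have h4 : 0 <= `|x| by []. have h5 : 0 <= `|y| by [].
nra.
Qed.
Lemma ip_ge x y : - (`|x| * `|y|) <= ip x y.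
Proof. have := ip_le x (- y); rewrite normrN -scaleN1r ipZr; lra. Qed.
Lemma ip_sumr n (c : 'I_n -> R) (b : 'I_n -> V) x :
  ip x (\sum_(i < n) c i *: b i) = \sum_(i < n) c i * ip x (b i).
Proof.
elim/big_rec2: _ => [|i y1 y2 _ IH]; first by rewrite ip0r.
by rewrite ipDr ipZr IH.
Qed.
Lemma ipxx0 x : ip x x = 0 -> x = 0.
Proof. by rewrite ipxx => /eqP; rewrite sqrf_eq0 normr_eq0 => /eqP. Qed.
End IP.

Lemma ord_cases n (i : 'I_n.+1) :
  (exists j : 'I_n, i = widen_ord (leqnSn n) j) \/ i = ord_max.
Proof.
case: (ltnP i n) => h; first by left; exists (Ordinal h); apply: val_inj.
right; apply: val_inj => /=; have := ltn_ord i; lia.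
Qed.

Section Proj.
Context (R : realType) (V : normedModType R) (ip : V -> V -> R) (Hip : inner_product ip).

Lemma orth_span n (b : 'I_n -> V) x y :
  (forall i, ip x (b i) = 0) -> Defs.span b y -> ip x y = 0.
Proof.
move=> H [c ->]; rewrite (ip_sumr Hip) big1 // => i _; by rewrite H mulr0.
Qed.

Lemma span_ext n (b : 'I_n.+1 -> V) (c : 'I_n -> R) (cl : R) :
  Defs.span b (\sum_(i < n) c i *: b (widen_ord (leqnSn n) i) + cl *: b ord_max).
Proof.
exists (fun j : 'I_n.+1 => if unlift ord_max j is Some i then c i else cl).
rewrite big_ord_recr /= unlift_none; congr (_ + _); apply: eq_bigr => i _ /=.
have -> : widen_ord (leqnSn n) i = lift ord_max i by apply: val_inj => /=; rewrite /bump leqNgt ltn_ord.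
by rewrite liftK.
Qed.

Lemma proj_exists n (b : 'I_n -> V) v :
  exists2 p, Defs.span b p & forall i, ip (v - p) (b i) = 0.
Proof.
elim: n b v => [|n IH] b v.
  exists 0; first by exists (fun _ => 0); rewrite big_ord0.
  by case.
pose b' := fun i : 'I_n => b (widen_ord (leqnSn n) i).
have [pv Spv Hv] := IH b' v.
have [pe Spe He] := IH b' (b ord_max).
have Sv := Spv; case: Spv => cv Ecv; case: Spe => ce Ece.
have He' : forall y, Defs.span b' y -> ip (b ord_max - pe) y = 0.
  by move=> y; apply: orth_span.
have Hv' : forall y, Defs.span b' y -> ip (v - pv) y = 0.
  by move=> y; apply: orth_span.
have Spe : Defs.span b' pe by exists ce.
have [E0|En0] := eqVneq (ip (b ord_max - pe) (b ord_max - pe)) 0.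
  have e0 := ipxx0 Hip E0.
  exists pv.
    by rewrite Ecv; have := span_ext b cv 0; rewrite scale0r addr0.
  move=> i; case: (ord_cases i) => [[j ->]|->]; first exact: Hv.
  have -> : b ord_max = pe by apply/eqP; rewrite -subr_eq0 e0.
  exact: Hv'.
pose e := b ord_max - pe.
have Ee : b ord_max = pe + e by rewrite /e addrC subrK.
have Hey : forall y, Defs.span b' y -> ip e y = 0 by exact: He'.
have Hej : forall j, ip e (b' j) = 0 by exact: He.
have Hne : ip e e != 0 by [].
clearbody e.
pose c := ip v e / ip e e.
exists (pv + c *: e).
  have -> : pv + c *: e = \sum_(i < n) (cv i - c * ce i) *: b' i + c *: b ord_max.
    have -> : \sum_(i < n) (cv i - c * ce i) *: b' i =
       \sum_(i < n) cv i *: b' i - c *: \sum_(i < n) ce i *: b' i.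
      rewrite scaler_sumr -sumrB; apply: eq_bigr => i _; by rewrite scalerBl scalerA.
    by rewrite Ecv Ee Ece scalerDr addrA subrK.
  exact: span_ext.
have Hee : c * ip e e = ip v e by rewrite /c mulfVK.
have Hpe : ip e pv = 0 by apply: Hey.
have Hpv : ip pv e = 0 by rewrite (ipC Hip).
move=> i; case: (ord_cases i) => [[j ->]|->].
  rewrite opprD addrA (ipBl Hip) (ipZl Hip) Hv Hej; lra.
rewrite Ee.
have h1 : ip (v - pv) pe = 0 by apply: Hv'.
have h2 : ip e pe = 0 by apply: Hey.
rewrite opprD addrA !(ipDr Hip) !(ipBl Hip) !(ipZl Hip) h2.
move: h1; rewrite (ipBl Hip) => h1; lra.
Qed.
End Proj.

Lemma key_real (R : realType) (Z G H A B F X Y c mu : R) :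
  0 <= Z -> 0 <= G -> 0 <= H -> 0 <= A -> 0 <= B -> 0 <= F -> 0 <= X -> 0 <= Y ->
  G ^+ 2 = Z ^+ 2 + 2 * c + H ^+ 2 -> H ^+ 2 = A ^+ 2 + B ^+ 2 ->
  H ^+ 2 = F ^+ 2 + X ^+ 2 -> A ^+ 2 = F ^+ 2 + Y ^+ 2 ->
  - (Z * B) <= c -> X <= mu * Y -> 1 <= mu -> Z <= mu * G.
Proof.
move=> hZ hG hH hA hB hF hX hY e1 e2 e3 e4 hc hXY hmu.
have k1 : Z ^+ 2 * A ^+ 2 <= G ^+ 2 * H ^+ 2.
  have : 0 <= (Z * B - H ^+ 2) ^+ 2 by apply: sqr_ge0.
  have : - (Z * B) * H ^+ 2 <= c * H ^+ 2 by apply: ler_wpM2r => //; apply: sqr_ge0.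
  rewrite e1; nra.
have k2 : H ^+ 2 <= mu ^+ 2 * A ^+ 2.
  have : X ^+ 2 <= (mu * Y) ^+ 2 by nra.
  have : F ^+ 2 <= mu ^+ 2 * F ^+ 2.
    have hm2 : 1 <= mu ^+ 2 by nra.
    have := sqr_ge0 F; nra.
  rewrite e3 e4; nra.
have [A0|Apos] := eqVneq A 0.
  have H0 : H ^+ 2 = 0 by move: k2; rewrite A0; have := sqr_ge0 H; nra.
  have B0 : B = 0 by move: e2; rewrite H0 A0; nra.
  have : Z ^+ 2 <= G ^+ 2 by move: hc; rewrite B0 e1 H0; nra.
  move=> h; have ZG : Z <= G by case: (lerP Z G) => // ?; nra.
  nra.
have hA' : 0 < A by rewrite lt_neqAle eq_sym Apos hA.
have : Z ^+ 2 <= (mu * G) ^+ 2.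
  have : Z ^+ 2 * A ^+ 2 <= (mu * G) ^+ 2 * A ^+ 2.
    by apply: (le_trans k1); rewrite exprMn; have := sqr_ge0 G; nra.
  by rewrite ler_pM2r // exprn_gt0.
have : 0 <= mu * G by nra.
move=> h1 h2; case: (lerP Z (mu * G)) => // ?; nra.
Qed.

Section Main.
Context (R : realType) (V : normedModType R) (ip : V -> V -> R) (Hip : inner_product ip).

Lemma span_sub n (b : 'I_n -> V) x y :
  Defs.span b x -> Defs.span b y -> Defs.span b (x - y).
Proof.
move=> [c ->] [d ->]; exists (fun i => c i - d i).
by rewrite -sumrB; apply: eq_bigr => i _; rewrite scalerBl.
Qed.

Lemma aff_proj n (b : 'I_n -> V) ubar v : exists p, [/\ affine ubar (Defs.span b) p,
   (forall y, Defs.span b y -> ip (v - p) y = 0) &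
   ((`|v - p|)%:E <= dist_set v (affine ubar (Defs.span b)))%E].
Proof.
have [q Sq Oq] := proj_exists Hip b (v - ubar).
have Oq' : forall y, Defs.span b y -> ip (v - (ubar + q)) y = 0.
  by move=> y Sy; rewrite opprD addrA; apply: (orth_span Hip Oq).
exists (ubar + q); split => //; first by exists q.
apply: le_ereal_inf_tmp => _ [a [y Sy <-] <-]; rewrite lee_fin.
have -> : v - (ubar + y) = (v - (ubar + q)) + (q - y).
  by rewrite opprD addrA -[in LHS](subrK q (v - ubar)) -addrA opprD !addrA. 
have h := normD2 Hip (v - (ubar + q)) (q - y).
rewrite Oq' ?mulr0 ?addr0 in h; last exact: span_sub.
have : `|v - (ubar + q)| ^+ 2 <= `|v - (ubar + q) + (q - y)| ^+ 2.
  by rewrite h lerDl sqr_ge0.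
have := normr_ge0 (v - (ubar + q)); have := normr_ge0 (v - (ubar + q) + (q - y)).
by case: (lerP `|v - (ubar + q)| `|v - (ubar + q) + (q - y)|) => // ?; nra.
Qed.
End Main.

Section Mu.
Context (R : realType) (V : normedModType R) (ip : V -> V -> R) (Hip : inner_product ip).

Lemma normP_le W PW x : orth_proj ip W PW -> `|PW x| <= `|x|.
Proof.
move=> HP; have [WP OP] := HP x.
have h := normD2 Hip (PW x) (x - PW x).
rewrite addrC subrK (ipC Hip) OP // mulr0 addr0 in h.
have : `|PW x| ^+ 2 <= `|x| ^+ 2 by rewrite h lerDl sqr_ge0.
have := normr_ge0 x; have := normr_ge0 (PW x).
by case: (lerP `|PW x| `|x|) => // ?; nra.
Qed.

Lemma mu_bound W PW (E : set V) muk : orth_proj ip W PW -> mu PW E = muk%:E ->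
  (forall x, E x -> `|x| <= muk * `|PW x|) /\ 1 <= muk.
Proof.
move=> HP; rewrite /mu; case: asboolP => [sub [<-]|nsub Hmu].
  split=> // x /sub ->; by rewrite normr0 mul1r.
have key : forall x, E x -> x != 0 -> PW x != 0 /\ `|x| <= muk * `|PW x|.
  move=> x Ex nx.
  have : (mu_ratio PW x <= muk%:E)%E.
    rewrite -Hmu; apply: ereal_sup_ubound; exists x => //; split => //.
    by move=> /= x0; move: nx; rewrite x0 eqxx.
  rewrite /mu_ratio; case: eqP => // P0; rewrite lee_fin => h.
  have Pp : 0 < `|PW x| by rewrite normr_gt0; apply/eqP.
  by split; [apply/eqP | rewrite -ler_pdivrMr].
have [x0 Ex0 nx0] : exists2 x, E x & x != 0.
  apply: contra_notP nsub => H x Ex /=; apply/eqP.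
  by case: (eqVneq x 0) => // nx; exfalso; apply: H; exists x.
have m1 : 1 <= muk.
  have [P0 h] := key x0 Ex0 nx0.
  have Pp : 0 < `|PW x0| by rewrite normr_gt0.
  have := normP_le x0 HP; nra.
split => //.
move=> x Ex; have [->|nx] := eqVneq x 0.
  by rewrite normr0 mulr_ge0 ?normr_ge0 //; lra.
by have [] := key x Ex nx.
Qed.
End Mu.

Section PBDW.
Context (R : realType) (V : normedModType R) (ip : V -> V -> R) (Hip : inner_product ip).

Lemma pbdw n (b : 'I_n -> V) (W : set V) PW ubar muk eps (u us w : V) :
  orth_proj ip W PW -> mu PW (Defs.span b) = muk%:E -> W w ->
  orth_compl ip W (u - w) -> orth_compl ip W (us - w) ->
  (forall v, orth_compl ip W (v - w) ->
     (dist_set us (affine ubar (Defs.span b)) <= dist_set v (affine ubar (Defs.span b)))%E) ->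
  (dist_set u (affine ubar (Defs.span b)) <= eps%:E)%E -> `|u - us| <= muk * eps.
Proof.
move=> HP Hmu Ww Ou Ous Hmin Deps.
have [m1b m1] := mu_bound Hip HP Hmu.
have [q [Aq Oq Dq]] := aff_proj Hip b ubar u.
have [p [Ap Op Dp]] := aff_proj Hip b ubar us.
have uq : `|u - q| <= eps by rewrite -lee_fin (le_trans Dq).
have orthf : forall eta, orth_compl ip W eta -> ip (us - p) eta = 0.
  move=> eta Oeta.
  have [c Ec] : {c | c = ip (us - p) eta} by eexists.
  have [N EN] : {N | N = `|eta| ^+ 2} by eexists.
  have N0 : 0 <= N by rewrite EN sqr_ge0.
  pose t := - c / (N + 1).
  have ht : t * (N + 1) = - c by rewrite /t mulfVK // gt_eqF // ltr_wpDl.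
  have Ov : orth_compl ip W (us + t *: eta - w).
    move=> y Wy; rewrite addrAC (ipDl Hip) (ipZl Hip) Ous // Oeta // mulr0 addr0 //.
  have : (`|us - p|%:E <= (`|us + t *: eta - p|)%:E)%E.
    apply: (le_trans Dp); apply: (le_trans (Hmin _ Ov)).
    by apply: ereal_inf_lbound; exists p.
  rewrite lee_fin addrAC => hle.
  have h2 : `|us - p| ^+ 2 <= `|us - p + t *: eta| ^+ 2.
    by have := normr_ge0 (us - p); nra.
  rewrite (normD2 Hip (us - p) (t *: eta)) -(ipxx Hip (t *: eta)) (ipZl Hip) (ipZr Hip) (ipZr Hip) -Ec (ipxx Hip) -EN in h2.
  have h3 : 0 <= (N + 1) ^+ 2 * (2 * (t * c) + t * (t * N)).
    by apply: mulr_ge0; [apply: sqr_ge0 | lra].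
  have e : (N + 1) ^+ 2 * (2 * (t * c) + t * (t * N)) =
           2 * c * (t * (N + 1)) * (N + 1) + (t * (N + 1)) ^+ 2 * N by ring.
  rewrite e ht in h3.
  have c2 : c ^+ 2 = 0 by have := sqr_ge0 c; nra.
  by rewrite -Ec; apply/eqP; rewrite -sqrf_eq0 c2.
have Sx : Defs.span b (p - q).
  case: Ap => yp Syp <-; case: Aq => yq Syq <-.
  by rewrite opprD addrACA subrr add0r; apply: span_sub.
have Oz : orth_compl ip W (u - us).
  have -> : u - us = (u - w) - (us - w) by rewrite opprB addrA subrK.
  by move=> y Wy; rewrite (ipBl Hip) Ou // Ous // subrr.
have [WPx Oh'] := HP (p - q).
have [z Ez] : {z | z = u - us} by eexists.
have [f Ef] : {f | f = us - p} by eexists.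
have [x Ex] : {x | x = p - q} by eexists.
rewrite -Ex in Sx WPx Oh'.
have [hp Eh] : {hp | hp = x - PW x} by eexists.
rewrite -Eh in Oh'.
have i1 : ip f x = 0 by rewrite Ef; apply: Op.
have i2 : ip f hp = 0 by rewrite Ef; apply: orthf.
have i3 : ip z (PW x) = 0 by rewrite Ez; apply: Oz.
have i4 : ip hp (PW x) = 0 by apply: Oh'.
have i5 : ip f z = 0 by rewrite Ef Ez; apply: orthf.
have Vq : z + ((f + PW x) + hp) = u - q.
  rewrite Eh addrACA subrr addr0 Ez Ef Ex.
  by rewrite [(us - p) + _]addrA subrK addrA subrK.
have Vh : (f + PW x) + hp = f + x by rewrite Eh addrACA subrr addr0.
have key := @key_real R `|z| `|z + ((f + PW x) + hp)| `|(f + PW x) + hp| `|f + PW x| `|hp|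
  `|f| `|x| `|PW x| (ip z hp) muk.
have lz : `|z| <= muk * `|u - q|.
  rewrite -Vq; apply: key => //.
  - rewrite (normD2 Hip z) !(ipDr Hip) i3 ((ipC Hip) z f) i5; congr (_ + _ + _); ring.
  - rewrite (normD2 Hip (f + PW x) hp) (ipDl Hip) i2 ((ipC Hip) (PW x) hp) i4; ring.
  - by rewrite Vh (normD2 Hip f x) i1; ring.
  - rewrite (normD2 Hip f (PW x)).
    have -> : ip f (PW x) = 0.
      have -> : PW x = x - hp by rewrite Eh opprB addrC subrK.
      by rewrite (ipBr Hip) i1 i2 subrr.
    ring.
  - exact: (ip_ge Hip).
  - by apply: m1b.
rewrite -Ez; apply: (le_trans lz); apply: ler_wpM2l => //; lra.
Qed.
End PBDW.


Lemma dist_real (R : realType) (V : normedModType R) (M : set V) v x : M x ->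
  exists d, [/\ dist_set v M = d%:E, 0 <= d & d <= `|v - x|].
Proof.
move=> Mx.
have ub : (dist_set v M <= (`|v - x|)%:E)%E by apply: ereal_inf_lbound; exists x.
have lb : (0%:E <= dist_set v M)%E.
  by apply: le_ereal_inf_tmp => _ [a _ <-]; rewrite lee_fin.
move: ub lb; case: (dist_set v M) => [d| |] //= ub lb.
by exists d; split => //; rewrite -lee_fin.
Qed.

Theorem theorem3p2 (R : realType) (V : completeNormedModType R)
  (ip : V -> V -> R)
  (d : nat) (Y : set 'rV[R]_d) (u : 'rV[R]_d -> V)
  (m : nat) (W : set V) (PW : V -> V)
  (K : nat) (Mk : 'I_K -> set V) (ubar : 'I_K -> V) (Vbar : 'I_K -> set V)
  (n : 'I_K -> nat) (eps : 'I_K -> R) (muk : 'I_K -> R) (sigma : R)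
  (ustar : 'I_K -> V -> V)
  (S : V -> R) (r Rc : R) (kstar : V -> 'I_K) :
  inner_product ip ->
  compact Y -> {within Y, continuous u} ->
  subspace_of_dim W m -> orth_proj ip W PW ->
  u @` Y = \bigcup_(k in [set: 'I_K]) Mk k ->
  (forall k, subspace_of_dim (Vbar k) (n k) /\ (n k <= m)%N) ->
  (forall k x, Mk k x ->
     (dist_set x (affine (ubar k) (Vbar k)) <= (eps k)%:E)%E) ->
  (forall k, mu PW (Vbar k) = (muk k)%:E) ->
  0 < sigma ->
  (forall k, muk k * eps k <= sigma) ->
  (* PBDW estimators: u_k^*(w) = argmin { dist(v, V_k) : v in w + W^perp } *)
  (forall k w, W w ->
     orth_compl ip W (ustar k w - w) /\
     (forall v, orth_compl ip W (v - w) ->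
        (dist_set (ustar k w) (affine (ubar k) (Vbar k))
         <= dist_set v (affine (ubar k) (Vbar k)))%E)) ->
  (* surrogate *)
  0 < r -> r <= Rc ->
  (forall v, 0 <= S v) ->
  (forall v, (r%:E * dist_set v (u @` Y) <= (S v)%:E)%E /\
             ((S v)%:E <= Rc%:E * dist_set v (u @` Y))%E) ->
  (* surrogate model selection *)
  (forall w, W w -> forall k, S (ustar (kstar w) w) <= S (ustar k w)) ->
  (ereal_sup [set (`|x - ustar (kstar (PW x)) (PW x)|)%:E | x in u @` Y]
     <= delta ip W (u @` Y) (Rc / r * sigma))%E
  /\
  (* idealized selection: S = dist, r = R = 1 *)
  (forall kd : V -> 'I_K,
     (forall w, W w -> forall k,
        (dist_set (ustar (kd w) w) (u @` Y) <= dist_set (ustar k w) (u @` Y))%E) ->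
     (ereal_sup [set (`|x - ustar (kd (PW x)) (PW x)|)%:E | x in u @` Y]
        <= delta ip W (u @` Y) sigma)%E).
Proof.
move=> Hip _ _ _ HP HU HV Heps Hmu Hsig Hme Hstar Hr HrR HS0 HSb Hsel.
set M := u @` Y.
have claimA : forall x, M x -> exists k, (dist_set (ustar k (PW x)) M <= sigma%:E)%E.
  move=> x Mx; have : (\bigcup_(k in [set: 'I_K]) Mk k) x by rewrite -HU.
  move=> -[k _ Mkx]; exists k.
  have [WPx Ox] := HP x.
  have [Ous Hmin] := Hstar k (PW x) WPx.
  have [[b [_ Eb]] _] := HV k.
  have Hmu' := Hmu k; have He := Heps k x Mkx.
  rewrite Eb in Hmin Hmu' He.
  have le := pbdw Hip HP Hmu' WPx Ox Ous Hmin He.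
  have [dd [-> _ hd]] := dist_real (ustar k (PW x)) Mx.
  rewrite lee_fin; apply: (le_trans hd); rewrite distrC.
  exact: (le_trans le (Hme k)).
have final : forall (ks : V -> 'I_K) (s : R), 0 <= s ->
   (forall x, M x -> (dist_set (ustar (ks (PW x)) (PW x)) M <= s%:E)%E) ->
   (ereal_sup [set (`|x - ustar (ks (PW x)) (PW x)|)%:E | x in M] <= delta ip W M s)%E.
  move=> ks s s0 Hd; apply: ge_ereal_sup => _ [x Mx <-].
  apply: ereal_sup_ubound; exists x, (ustar (ks (PW x)) (PW x)); split => //.
  - rewrite /fattening /=; have [dd [-> _ hd]] := dist_real x Mx.
    by rewrite lee_fin (le_trans hd) // subrr normr0.
  - exact: Hd.
  - have [WPx Ox] := HP x.
    have [Ous _] := Hstar (ks (PW x)) (PW x) WPx.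
    move=> y Wy.
    have -> : x - ustar (ks (PW x)) (PW x) = (x - PW x) - (ustar (ks (PW x)) (PW x) - PW x).
      by rewrite opprB addrA subrK.
    by rewrite (ipBl Hip) Ox // Ous // subrr.
split.
  apply: final; first by apply: mulr_ge0; [apply: divr_ge0|]; lra.
  move=> x Mx; have [k Hk] := claimA x Mx.
  have [WPx _] := HP x.
  have [dk [Ek dk0 _]] := dist_real (ustar k (PW x)) Mx.
  have [ds [Es ds0 _]] := dist_real (ustar (kstar (PW x)) (PW x)) Mx.
  move: Hk; rewrite Ek lee_fin => Hk; rewrite Es lee_fin.
  have [h1 _] := HSb (ustar (kstar (PW x)) (PW x)).
  have [_ h2] := HSb (ustar k (PW x)).
  rewrite Es -EFinM lee_fin in h1; rewrite Ek -EFinM lee_fin in h2.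
  have h3 := Hsel (PW x) WPx k.
  have : r * ds <= Rc * sigma by nra.
  move=> h; rewrite mulrAC ler_pdivlMr //; lra.
move=> kd Hkd; apply: final; first lra.
move=> x Mx; have [k Hk] := claimA x Mx.
have [WPx _] := HP x.
exact: (le_trans (Hkd _ WPx k)).
Qed.
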